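(* Let $n\ge2$ and let $\Lambda:B(\mathcal{H}_n)\to B(\mathcal{H}_m)$ be a positive linear map. Then $\Lambda$ is $2$-positive if and only if $(\mathbf{1}_2\otimes\Lambda)(|\Psi^\beta\rangle\langle\Psi^\beta|)\ge0$ for all vectors $|\Psi^\beta\rangle=|0\rangle|\beta_0\rangle+|1\rangle|\beta_1\rangle\in\mathcal{H}_2\otimes\mathcal{H}_n$ with $|\beta_0\rangle,|\beta_1\rangle$ orthonormal.
   Context: $B(\mathcal{H}_n)$ is the algebra of operators on an $n$-dimensional Hilbert space; $\{|0\rangle,|1\rangle\}$ is an orthonormal basis of $\mathcal{H}_2$. A linear map $\Lambda$ is positive if it maps positive semidefinite operators to positive semidefinite operators, and $2$-positive if $\mathbf{1}_2\otimes\Lambda$ is positive, where $\mathbf{1}_2$ is the identity map on $B(\mathcal{H}_2)$. *)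

(* Defs.v *)
From HB Require Import structures.
From mathcomp Require Import all_boot all_order all_algebra.
Set Implicit Arguments. Unset Strict Implicit. Unset Printing Implicit Defensive.
Import Order.TTheory GRing.Theory Num.Theory.
Local Open Scope ring_scope.

(* Scalars: any numeric algebraically closed field C (e.g. complex numbers);
   B(H_n) is 'M[C]_n. H_2 (x) H_n is C^(n+n) with basis |0>|j> = first block,
   |1>|j> = second block. *)

Definition mxadj (C : numClosedFieldType) (p q : nat) (A : 'M[C]_(p, q)) : 'M[C]_(q, p) :=
  (map_mx Num.conj A)^T.

Definition psd (C : numClosedFieldType) (p : nat) (A : 'M[C]_p) : Prop :=
  forall v : 'cV[C]_p, 0 <= (mxadj v *m A *m v) 0 0.

Definition positive_map (C : numClosedFieldType) (n m : nat)
  (L : 'M[C]_n -> 'M[C]_m) : Prop :=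
  forall X : 'M[C]_n, psd X -> psd (L X).

(* (1_2 (x) L) acting on X = sum_{ij} |i><j| (x) X_ij, written in 2x2 blocks *)
Definition id2_tensor (C : numClosedFieldType) (n m : nat)
  (L : 'M[C]_n -> 'M[C]_m) (X : 'M[C]_(n + n)) : 'M[C]_(m + m) :=
  block_mx (L (ulsubmx X)) (L (ursubmx X)) (L (dlsubmx X)) (L (drsubmx X)).

Definition two_positive (C : numClosedFieldType) (n m : nat)
  (L : 'M[C]_n -> 'M[C]_m) : Prop :=
  forall X : 'M[C]_(n + n), psd X -> psd (id2_tensor L X).

Definition orthonormal2 (C : numClosedFieldType) (n : nat) (b0 b1 : 'cV[C]_n) : Prop :=
  mxadj b0 *m b0 = 1%:M /\ mxadj b1 *m b1 = 1%:M /\ mxadj b0 *m b1 = 0.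

(* Main.v *)
Require Import Defs.
From HB Require Import structures.
From mathcomp Require Import all_boot all_order all_algebra spectral ring.
Set Implicit Arguments. Unset Strict Implicit. Unset Printing Implicit Defensive.
Import Order.TTheory GRing.Theory Num.Theory.
Local Open Scope ring_scope.

Section Adj.
Variable C : numClosedFieldType.

Lemma mxadj_mul p q r (A : 'M[C]_(p, q)) (B : 'M[C]_(q, r)) :
  mxadj (A *m B) = mxadj B *m mxadj A.
Proof. by rewrite /mxadj map_mxM trmx_mul. Qed.

Lemma mxadjK p q (A : 'M[C]_(p, q)) : mxadj (mxadj A) = A.
Proof. by apply/matrixP => i j; rewrite !mxE conjCK. Qed.

Lemma mxadjD p q (A B : 'M[C]_(p, q)) : mxadj (A + B) = mxadj A + mxadj B.
Proof. by apply/matrixP => i j; rewrite !mxE rmorphD. Qed.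

Lemma mxadjZ p q a (A : 'M[C]_(p, q)) : mxadj (a *: A) = a^* *: mxadj A.
Proof. by apply/matrixP => i j; rewrite !mxE rmorphM. Qed.

Lemma mxadj0 p q : mxadj (0 : 'M[C]_(p, q)) = 0.
Proof. by apply/matrixP => i j; rewrite !mxE rmorph0. Qed.

Lemma mxadj_delta p q i j : mxadj (delta_mx i j : 'M[C]_(p, q)) = delta_mx j i.
Proof. by apply/matrixP => k l; rewrite !mxE rmorph_nat andbC. Qed.

Lemma mxadj_sum I (r : seq I) (s : I -> C) p q (x : I -> 'M[C]_(p, q)) :
  mxadj (\sum_(i <- r) s i *: x i) = \sum_(i <- r) (s i)^* *: mxadj (x i).
Proof.
elim: r => [|a r IH]; first by rewrite !big_nil mxadj0.
by rewrite !big_cons mxadjD mxadjZ IH.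
Qed.

Lemma mxadj_col p1 p2 (a : 'cV[C]_p1) (b : 'cV[C]_p2) :
  mxadj (col_mx a b) = row_mx (mxadj a) (mxadj b).
Proof. by rewrite /mxadj map_col_mx tr_col_mx. Qed.

Lemma psd_rank1 p (v : 'cV[C]_p) : psd (v *m mxadj v).
Proof.
move=> u; rewrite !mulmxA -[_ *m u]mulmxA.
have -> : mxadj u *m v = mxadj (mxadj v *m u) by rewrite mxadj_mul mxadjK.
set z := mxadj v *m u.
have -> : (mxadj z *m z) 0 0 = (z 0 0)^* * z 0 0.
  by rewrite !mxE big_ord1 !mxE.
by rewrite mulrC mul_conjC_ge0.
Qed.
End Adj.
Section Herm.
Variable C : numClosedFieldType.

Lemma delta_entry p (X : 'M[C]_p) (i j : 'I_p) :
  ((delta_mx 0 i : 'rV[C]_p) *m X *m (delta_mx j 0 : 'cV[C]_p)) = (X i j)%:M.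
Proof. by rewrite -rowE -colE; apply/matrixP => a b; rewrite !ord1 !mxE. Qed.

Lemma quad2 p (X : 'M[C]_p) (i j : 'I_p) (x y : C) :
  let v : 'cV[C]_p := x *: delta_mx i 0 + y *: delta_mx j 0 in
  (mxadj v *m X *m v) 0 0 =
  x^* * x * X i i + x^* * y * X i j + y^* * x * X j i + y^* * y * X j j.
Proof.
rewrite /= mxadjD !mxadjZ !mxadj_delta !(mulmxDl, mulmxDr).
rewrite -!(scalemxAl, scalemxAr) !delta_entry !mxE /=; ring.
Qed.

Lemma cD (x y : C) : (x + y)^* = x^* + y^*. Proof. exact: rmorphD. Qed.
Lemma cM (x y : C) : (x * y)^* = x^* * y^*. Proof. exact: rmorphM. Qed.
Lemma cN (x : C) : (- x)^* = - x^*. Proof. exact: rmorphN. Qed.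

Lemma psd_herm p (X : 'M[C]_p) : psd X -> mxadj X = X.
Proof.
move=> hX; apply/matrixP => j i; rewrite !mxE.
have r (q : C) : 0 <= q -> q^* = q by move=> /geC0_conj.
have Hd k : 0 <= X k k.
  have := hX (1 *: delta_mx k 0 + 0 *: delta_mx k 0).
  by rewrite quad2 rmorph1 rmorph0 !(mul0r, mul1r, mulr0, addr0, mulr1).
have E1 := r _ (hX (1 *: delta_mx i 0 + 1 *: delta_mx j 0)).
have E2 := r _ (hX (1 *: delta_mx i 0 + 'i *: delta_mx j 0)).
rewrite quad2 in E1; rewrite quad2 in E2.
rewrite !rmorph1 !mul1r !mulr1 in E1 E2.
rewrite !cD !cM !conjCi !cN !conjCi !opprK (r _ (Hd i)) (r _ (Hd j)) in E1 E2.
have ii : 'i * 'i = -1 :> C by rewrite -expr2 sqrCi.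
move: E1 E2; set a := X i j; set b := X j i; set c := X i i; set d := X j j.
move=> /eqP; rewrite -subr_eq0 => /eqP E1 /eqP; rewrite -subr_eq0 => /eqP E2.
have e1 : a^* + b^* - (a + b) = 0 by rewrite -E1; ring.
have e2 : -('i * 'i) * (a^* - b^* + a - b) = 0. rewrite -(mulr0 'i) -E2. ring.
rewrite ii opprK mul1r in e2.
have e3 : 2%:R * (a^* - b) = 0.
  transitivity ((a^* + b^* - (a + b)) + (a^* - b^* + a - b)); first by ring.
  by rewrite e1 e2 addr0.
move/eqP: e3; rewrite mulf_eq0 pnatr_eq0 /= subr_eq0 => /eqP.
done.
Qed.
End Herm.
Lemma sum2 (V : nmodType) (F : 'I_2 -> V) : \sum_(i < 2) F i = F ord0 + F ord_max.
Proof.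
rewrite !big_ord_recr big_ord0 /= add0r; congr (F _ + _); exact: val_inj.
Qed.

Section Main.
Variables (C : numClosedFieldType) (n m : nat) (L : {linear 'M[C]_n -> 'M[C]_m}).

Definition g (w : 'cV[C]_m) (c c' : 'cV[C]_n) (w' : 'cV[C]_m) :=
  (mxadj w *m L (c *m mxadj c') *m w') 0 0.

Lemma g_c1 (w w' : 'cV[C]_m) (s : 'I_2 -> C) (c : 'I_2 -> 'cV[C]_n) c' :
  g w (\sum_k s k *: c k) c' w' = \sum_k s k * g w (c k) c' w'.
Proof.
rewrite /g mulmx_suml linear_sum mulmx_sumr mulmx_suml summxE.
apply: eq_bigr => k _; rewrite -scalemxAl linearZ /= -scalemxAr -scalemxAl mxE //.
Qed.

Lemma g_c2 (w w' : 'cV[C]_m) (s : 'I_2 -> C) (c : 'I_2 -> 'cV[C]_n) c' :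
  g w c' (\sum_k s k *: c k) w' = \sum_k (s k)^* * g w c' (c k) w'.
Proof.
rewrite /g mxadj_sum mulmx_sumr linear_sum mulmx_sumr mulmx_suml summxE.
apply: eq_bigr => k _; rewrite -scalemxAr linearZ /= -scalemxAr -scalemxAl mxE //.
Qed.

Lemma g_w1 (s : 'I_2 -> C) (u : 'I_2 -> 'cV[C]_m) w' (c c' : 'cV[C]_n) :
  g (\sum_k s k *: u k) c c' w' = \sum_k (s k)^* * g (u k) c c' w'.
Proof.
rewrite /g mxadj_sum !mulmx_suml summxE.
apply: eq_bigr => k _; rewrite -!scalemxAl mxE //.
Qed.

Lemma g_w2 (s : 'I_2 -> C) (u : 'I_2 -> 'cV[C]_m) w (c c' : 'cV[C]_n) :
  g w c c' (\sum_k s k *: u k) = \sum_k s k * g w c c' (u k).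
Proof.
rewrite /g mulmx_sumr summxE.
apply: eq_bigr => k _; rewrite -!scalemxAr mxE //.
Qed.

Lemma expand (b : 'I_2 -> 'cV[C]_n) (t : 'M[C]_2) (w : 'I_2 -> 'cV[C]_m) :
  \sum_i \sum_j g (w i) (\sum_k t i k *: b k) (\sum_l t j l *: b l) (w j) =
  \sum_k \sum_l g (\sum_i (t i k)^* *: w i) (b k) (b l) (\sum_j (t j l)^* *: w j).
Proof.
under eq_bigr => i _ do under eq_bigr => j _ do
  rewrite g_c1 (eq_bigr _ (fun k _ => congr1 (fun z => t i k * z) (g_c2 _ _ _ _ _))).
under [RHS]eq_bigr => k _ do under eq_bigr => l _ do
  rewrite g_w1 (eq_bigr _ (fun i _ => congr1 (fun z => (t i k)^*^* * z) (g_w2 _ _ _ _ _))).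
rewrite !sum2 !conjCK; ring.
Qed.

Lemma quadform (a0 a1 : 'cV[C]_n) (w0 w1 : 'cV[C]_m) :
  (mxadj (col_mx w0 w1) *m id2_tensor L (col_mx a0 a1 *m mxadj (col_mx a0 a1))
     *m col_mx w0 w1) 0 0 =
  g w0 a0 a0 w0 + g w0 a0 a1 w1 + g w1 a1 a0 w0 + g w1 a1 a1 w1.
Proof.
rewrite /id2_tensor /g !mxadj_col mul_col_row block_mxKul block_mxKur block_mxKdl block_mxKdr.
rewrite mul_row_block mul_row_col !mulmxDl !mxE; ring.
Qed.

Lemma rank1_ok (hn : (2 <= n)%N)
  (H : forall b0 b1 : 'cV[C]_n, orthonormal2 b0 b1 ->
     let Psi : 'cV[C]_(n + n) := col_mx b0 b1 in
     psd (id2_tensor L (Psi *m mxadj Psi)))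
  (phi : 'cV[C]_(n + n)) (w : 'cV[C]_(m + m)) :
  0 <= (mxadj w *m id2_tensor L (phi *m mxadj phi) *m w) 0 0.
Proof.
rewrite -(vsubmxK phi) -(vsubmxK w).
set a0 := usubmx phi; set a1 := dsubmx phi; set w0 := usubmx w; set w1 := dsubmx w.
pose A : 'M[C]_(2, n) := col_mx a0^T a1^T.
pose S := schmidt A.
have hS : S *m map_mx Num.conj S^T = 1%:M by apply/unitarymxP; exact: schmidt_unitarymx.
have [D hD] := submxP (schmidt_sub A).
pose b k := (row k S)^T.
pose af i := \sum_k D i k *: b k.
have haf i : (row i A)^T = af i.
  apply/matrixP => x y; rewrite ord1 /af summxE hD !mxE.
  by apply: eq_bigr => k _; rewrite !mxE.
have ha0 : a0 = af ord0.
  rewrite -haf; apply/matrixP => x y; rewrite ord1 !mxE.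
  by case: splitP => k hk; rewrite ?ord1 ?mxE // in hk *.
have ha1 : a1 = af ord_max.
  rewrite -haf; apply/matrixP => x y; rewrite ord1 !mxE.
  by case: splitP => k hk; rewrite ?ord1 ?mxE // in hk *.
have hb k l : mxadj (b k) *m b l = ((k == l)%:R)%:M.
  apply/matrixP => x y; rewrite !ord1.
  have := congr1 (fun M : 'M[C]_2 => M l k) hS; rewrite !mxE eqxx mulr1n eq_sym => <-.
  by apply: eq_bigr => j _; rewrite !mxE mulrC.
have hon : orthonormal2 (b ord0) (b ord_max).
  split; first by rewrite hb eqxx.
  split; first by rewrite hb eqxx.
  by rewrite hb; apply/matrixP => x y; rewrite !mxE /= mul0rn.
pose wf (i : 'I_2) := if i == ord0 then w0 else w1.
have -> : (mxadj (col_mx w0 w1) *m id2_tensor L (col_mx a0 a1 *m mxadj (col_mx a0 a1))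
     *m col_mx w0 w1) 0 0 = \sum_i \sum_j g (wf i) (af i) (af j) (wf j).
  by rewrite quadform ha0 ha1 !sum2 /=; ring.
rewrite /af expand !sum2 !addrA -quadform.
exact: (H _ _ hon).
Qed.

Lemma id2_lin a (X Y : 'M[C]_(n + n)) :
  id2_tensor L (a *: X + Y) = a *: id2_tensor L X + id2_tensor L Y.
Proof.
have e1 : ulsubmx (a *: X + Y) = a *: ulsubmx X + ulsubmx Y.
  by apply/matrixP => i j; rewrite !mxE.
have e2 : ursubmx (a *: X + Y) = a *: ursubmx X + ursubmx Y.
  by apply/matrixP => i j; rewrite !mxE.
have e3 : dlsubmx (a *: X + Y) = a *: dlsubmx X + dlsubmx Y.
  by apply/matrixP => i j; rewrite !mxE.
have e4 : drsubmx (a *: X + Y) = a *: drsubmx X + drsubmx Y.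
  by apply/matrixP => i j; rewrite !mxE.
by rewrite /id2_tensor e1 e2 e3 e4 !linearP scale_block_mx add_block_mx.
Qed.

Lemma id2_0 : id2_tensor L 0 = 0.
Proof.
have := id2_lin (-1) 0 0.
by rewrite scaler0 addr0 scaleN1r addNr.
Qed.

Definition F (w : 'cV[C]_(m + m)) (X : 'M[C]_(n + n)) :=
  (mxadj w *m id2_tensor L X *m w) 0 0.

Lemma F_lin w a X Y : F w (a *: X + Y) = a * F w X + F w Y.
Proof.
by rewrite /F id2_lin mulmxDr mulmxDl -scalemxAr -scalemxAl !mxE.
Qed.

Lemma F_0 w : F w 0 = 0.
Proof. by rewrite /F id2_0 mulmx0 mul0mx mxE. Qed.
End Main.
Unset Implicit Arguments.
Theorem lemma7 (C : numClosedFieldType) (n m : nat) (hn : (2 <= n)%N)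
  (L : {linear 'M[C]_n -> 'M[C]_m}) (hpos : positive_map L) :
  two_positive L <->
  (forall b0 b1 : 'cV[C]_n, orthonormal2 b0 b1 ->
     let Psi : 'cV[C]_(n + n) := col_mx b0 b1 in
     psd (id2_tensor L (Psi *m mxadj Psi))).
Proof.
split.
  by move=> h2 b0 b1 _ /=; apply: h2; apply: psd_rank1.
move=> H X hX w.
have hherm := psd_herm hX.
have hnorm : X \is normalmx.
  have e : map_mx Num.conj X^T = X by rewrite -map_trmx.
  by apply/normalmxP; rewrite e.
have hU := spectral_unitarymx X.
have hP : spectralmx X *m map_mx Num.conj (spectralmx X)^T = 1%:M by apply/unitarymxP.
move/orthomx_spectralP: hnorm; rewrite invmx_unitary //.
set P := spectralmx X; set d := spectral_diag X => hXe.
pose phi (i : 'I_(n + n)) : 'cV[C]_(n + n) := map_mx Num.conj P^T *m delta_mx i 0.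
have hadjP : mxadj (map_mx Num.conj P^T) = P.
  by apply/matrixP => i j; rewrite !mxE conjCK.
have hphi i : mxadj (phi i) = delta_mx 0 i *m P.
  by rewrite /phi mxadj_mul mxadj_delta hadjP.
have hXs : X = \sum_i d 0 i *: (phi i *m mxadj (phi i)).
  rewrite {1}hXe diag_mx_sum_delta mulmx_sumr mulmx_suml.
  apply: eq_bigr => i _; rewrite hphi /phi -scalemxAr -scalemxAl.
  by rewrite -(@mul_delta_mx _ _ 1 _ (0 : 'I_1)) !mulmxA.
have hd i : 0 <= d 0 i.
  have := hX (phi i); rewrite hphi /phi {1}hXe.
  rewrite !mulmxA -[delta_mx 0 i *m P *m _]mulmxA hP mulmx1.
  rewrite -!mulmxA [P *m (_ *m _)]mulmxA hP mul1mx mulmxA delta_entry !mxE eqxx mulr1n.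
  done.
change (0 <= F L w X); rewrite hXs.
apply: (big_ind (fun Y => 0 <= F L w Y)).
- by rewrite F_0.
- by move=> Y Z hY hZ; rewrite -[Y]scale1r F_lin mul1r addr_ge0.
- move=> i _; rewrite -[_ *: _]addr0 F_lin F_0 addr0.
  by apply: mulr_ge0 => //; apply: rank1_ok.
Qed.
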